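(* Let $r\ge 2$ and let $\mathcal{D}$ be the infinite lattice path defined in the context, with vertices $w_0=(0,0),w_1,w_2,\dots$ in order along the path, and for each $j\ge 0$ let $v_j$ be the leftmost vertex of $\mathcal{D}$ at height $j$ (the $j$-th northwest corner). Define $\mu$ on the vertices of $\mathcal{D}$ by $\mu(w_i)=v_i$. If $w_i$ has coordinates $(x,y)$, then $$\mu(w_i)=\big((r-1)x+(r-2)y,\;x+y\big).$$
   Context: Fix an integer $r\ge 2$. Define $c_1=0$, $c_2=1$, $c_n=rc_{n-1}-c_{n-2}$ for $n\ge 3$. For nonnegative integers $a,b$, the maximal Dyck path $\mathcal{P}(a,b)$ is the lattice path from $(0,0)$ to $(a,b)$ using unit north and east steps that never passes strictly above the line segment from $(0,0)$ to $(a,b)$ and is closest to that segment (i.e. it is the maximal such path in the partial order comparing heights at all vertices). For $n\ge 3$ let $\mathcal{D}_n=\mathcal{P}(c_{n-1}-c_{n-2},c_{n-2})$. Each $\mathcal{D}_{n}$ is a prefix of $\mathcal{D}_{n+1}$, and $\mathcal{D}$ denotes the infinite path $\bigcup_{n\ge 3}\mathcal{D}_n$; each $\mathcal{D}_n$ is identified with the prefix of $\mathcal{D}$ of the same length. The $i$-th vertex $w_i$ of $\mathcal{D}$ is the endpoint of its first $i$ steps. *)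

(* Defs.v *)
From mathcomp Require Import all_boot.
Set Implicit Arguments. Unset Strict Implicit. Unset Printing Implicit Defensive.

(* c_1 = 0, c_2 = 1, c_n = r c_{n-1} - c_{n-2} (n >= 3); c_0 is an unused dummy.
   For r >= 2 the sequence is nondecreasing, so truncated subtraction is exact. *)
Fixpoint cseq (r n : nat) : nat :=
  match n with
  | 0 => 0
  | 1 => 0
  | 2 => 1
  | S ((S m) as m1) => r * cseq r m1 - cseq r m
  end.

(* Lattice paths are sequences of unit steps: true = north, false = east.
   The vertex after the first i steps of p has coordinates (px p i, py p i). *)
Definition px (p : seq bool) (i : nat) : nat := count negb (take i p).
Definition py (p : seq bool) (i : nat) : nat := count id (take i p).

Definition below_path (a b : nat) (p : seq bool) : Prop :=
  [/\ size p = a + b, count id p = b &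
      forall i, i <= a + b -> py p i * a <= px p i * b].

Definition max_dyck (a b : nat) (p : seq bool) : Prop :=
  below_path a b p /\
  forall q, below_path a b q -> forall i, i <= a + b -> py q i <= py p i.

Definition prefix (D : nat -> bool) (n : nat) : seq bool := [seq D k | k <- iota 0 n].

Definition wx (D : nat -> bool) (i : nat) : nat := px (prefix D i) i.
Definition wy (D : nat -> bool) (i : nat) : nat := py (prefix D i) i.

(* D is the infinite path \bigcup_{n>=3} D_n: for every n >= 3 its prefix of
   length c_{n-1} (= (c_{n-1}-c_{n-2}) + c_{n-2}) is P(c_{n-1}-c_{n-2}, c_{n-2}). *)
Definition is_D (r : nat) (D : nat -> bool) : Prop :=
  forall n, 3 <= n ->
    max_dyck (cseq r n.-1 - cseq r n.-2) (cseq r n.-2) (prefix D (cseq r n.-1)).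

Definition leftmost_at (D : nat -> bool) (X Y : nat) : Prop :=
  (exists k, wx D k = X /\ wy D k = Y) /\
  (forall k, wy D k = Y -> X <= wx D k).

(* Main.v *)
Require Import Defs.
From mathcomp Require Import all_boot.
From mathcomp Require Import zify.

Lemma cnt_sum (s : seq bool) : count negb s + count id s = size s.
Proof. elim: s => //= b s IH; case: b => /=; lia. Qed.

Lemma pxy (p : seq bool) k : k <= size p -> px p k + py p k = k.
Proof. move=> hk; rewrite /px /py cnt_sum size_take; case: ltngtP hk => //; lia. Qed.

Lemma prefix_take D N k : k <= N -> take k (Defs.prefix D N) = Defs.prefix D k.
Proof. move=> hk; rewrite /Defs.prefix -map_take take_iota; congr map; congr iota; lia. Qed.

Lemma size_prefix D N : size (Defs.prefix D N) = N.
Proof. by rewrite /Defs.prefix size_map size_iota. Qed.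

Lemma wxy D k : wx D k + wy D k = k.
Proof. by rewrite /wx /wy pxy // size_prefix. Qed.

Lemma wy_py D N k : k <= N -> py (Defs.prefix D N) k = wy D k.
Proof.
move=> hk; rewrite /wy /py prefix_take // take_oversize //.
by rewrite size_prefix.
Qed.

Definition hh a b i := (i * b) %/ (a + b).
Definition chr a b := [seq hh a b k < hh a b k.+1 | k <- iota 0 (a + b)].

Lemma hh_step a b i : 0 < a + b -> hh a b i <= hh a b i.+1 <= (hh a b i).+1.
Proof.
move=> d0; rewrite /hh; apply/andP; split.
  by apply: leq_div2r; rewrite mulSn leq_addl.
have e := divn_eq (i * b) (a + b).
have lt := ltn_pmod (i * b) d0.
rewrite mulSn -ltnS ltn_divLR //.
rewrite {1}e; nia.
Qed.

Lemma py_chr a b i : 0 < a + b -> i <= a + b -> py (chr a b) i = hh a b i.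
Proof.
move=> d0; elim: i => [|i IH] hi.
  by rewrite /py take0 /hh mul0n div0n.
rewrite /py /chr -map_take take_iota (_ : minn i.+1 (a + b) = i + 1); last by lia.
rewrite iotaD map_cat count_cat add0n.
have := IH (ltnW hi); rewrite /py /chr -map_take take_iota.
rewrite (_ : minn i (a + b) = i); last by lia.
move=> ->; have := hh_step a b i d0; rewrite /=.
case: ltngtP => //=; lia.
Qed.

Lemma chr_below a b : 0 < a + b -> below_path a b (chr a b).
Proof.
move=> d0; have sz : size (chr a b) = a + b by rewrite /chr size_map size_iota.
split => //.
  have := py_chr a b (a + b) d0 (leqnn _); rewrite /py take_oversize ?sz // => ->.
  by rewrite /hh mulKn.
move=> i hi; have := pxy (chr a b) i; rewrite sz => /(_ hi) E.
rewrite py_chr //; have := leq_divM (i * b) (a + b).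
rewrite -/(hh a b i) => H.
have : px (chr a b) i = i - hh a b i by rewrite -(py_chr a b i d0 hi); lia.
move=> ->; rewrite mulnBl; nia.
Qed.

Lemma dyck_bounds a b p k : max_dyck a b p -> 0 < a + b -> k <= a + b ->
  py p k * (a + b) <= k * b < (py p k).+1 * (a + b).
Proof.
move=> [[sz cb bel] mx] d0 hk; apply/andP; split.
  have E := pxy p k; rewrite sz in E; have {}E := E hk.
  have := bel k hk; nia.
have := mx _ (chr_below a b d0) k hk; rewrite py_chr // => H.
apply: (leq_trans (ltn_ceil _ d0)); rewrite leq_mul2r; apply/orP; right.
by rewrite ltnS.
Qed.

Section C.
Variable r : nat.
Hypothesis r2 : 2 <= r.

Lemma c_rec m : cseq r m.+3 = r * cseq r m.+2 - cseq r m.+1.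
Proof. by []. Qed.

Lemma c_inc m : cseq r m.+1 < cseq r m.+2.
Proof.
elim: m => [|m IH]; first by [].
rewrite c_rec; have : 2 * cseq r m.+2 <= r * cseq r m.+2 by rewrite leq_mul2r r2 orbT.
lia.
Qed.

Lemma c_ge m : m <= cseq r m.+2.
Proof. elim: m => [|m IH] //; have := c_inc m.+1; lia. Qed.
End C.

Lemma level r D n k : 2 <= r -> is_D r D -> 3 <= n -> k <= cseq r n.-1 ->
  wy D k * cseq r n.-1 <= k * cseq r n.-2 < (wy D k).+1 * cseq r n.-1.
Proof.
move=> r2 hD n3 hk.
case: n n3 hk => [|[|[|n]]] // _ hk.
have {}hk : k <= cseq r n.+2 := hk.
suff H : wy D k * cseq r n.+2 <= k * cseq r n.+1 < (wy D k).+1 * cseq r n.+2 by exact: H.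
have inc := c_inc r r2 n.
have e : cseq r n.+2 - cseq r n.+1 + cseq r n.+1 = cseq r n.+2 by lia.
have := dyck_bounds (cseq r n.+2 - cseq r n.+1) (cseq r n.+1) (Defs.prefix D (cseq r n.+2)) k (hD n.+3 isT); rewrite e -(wy_py D _ _ hk).
apply => //; lia.
Qed.

Theorem mainTheorem1 (r : nat) (D : nat -> bool) :
  2 <= r -> is_D r D ->
  forall i : nat,
    leftmost_at D ((r - 1) * wx D i + (r - 2) * wy D i) (wx D i + wy D i).
Proof.
move=> r2 hD i.
set a := cseq r i.+1; set b := cseq r i.+2; set c := cseq r i.+3.
have ab : a < b := c_inc r r2 i.
have bc : b < c := c_inc r r2 i.+1.
have ib : i <= b := c_ge r r2 i.
have ec : c + a = r * b.
  rewrite /c c_rec -/a -/b; have : 2 * b <= r * b by rewrite leq_mul2r r2 orbT.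
  lia.
set y := wy D i.
have L1 : y * b <= i * a < y.+1 * b := level r D i.+3 _ r2 hD isT ib.
have yi : y <= i by have := wxy D i; rewrite -/y; lia.
set K := r * i - y.
have yri : y <= r * i by apply: (leq_trans yi); rewrite leq_pmull //; lia.
have eKb : K * b + y * b = r * i * b by rewrite -mulnDl /K subnK.
have eic : i * c + i * a = r * i * b by rewrite -mulnDr ec mulnCA mulnA.
move: L1 => /andP[h1 h2]; rewrite mulSn in h2.
have Kb1 : i * c <= K * b by lia.
have Kb2 : K * b < i * c + b by lia.
have Kc : K <= c.
  have : i * c <= b * c by rewrite leq_mul2r ib orbT.
  move=> h; have : K * b < c.+1 * b by rewrite mulSn; lia.
  by rewrite ltn_mul2r => /andP[_].
have L2 : wy D K * c <= K * b < (wy D K).+1 * c := level r D i.+4 _ r2 hD isT Kc.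
have wK : wy D K = i.
  move: L2 => /andP[l1 l2].
  have u1 : wy D K * c < i.+1 * c by rewrite mulSn; lia.
  have u2 : i * c < (wy D K).+1 * c by lia.
  move: u1 u2; rewrite !ltn_mul2r => /andP[_ u1] /andP[_ u2]; lia.
have eX : (r - 1) * wx D i + (r - 2) * wy D i = K - i.
  have := wxy D i; rewrite -/y /K => h.
  have -> : wx D i = i - y by lia.
  have [s0 ->] : exists s0, r = s0.+2 by exists (r - 2); lia.
  have [t ->] : exists t, i = y + t by exists (i - y); lia.
  have -> : s0.+2 - 1 = s0.+1 by lia. have -> : s0.+2 - 2 = s0 by lia. rewrite addKn.
  rewrite !mulSn !mulnDr; lia.
have eY : wx D i + wy D i = i by apply: wxy.
rewrite eX eY; split.
  exists K; split => //; have := wxy D K; rewrite wK; lia.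
move=> k wk; have := wxy D k; rewrite wk => hk.
suff : K <= k by lia.
case: (leqP k c) => kc; last by lia.
have : wy D k * c <= k * b < (wy D k).+1 * c := level r D i.+4 _ r2 hD isT kc.
rewrite wk => /andP[l1 _].
have : K * b < k.+1 * b by rewrite mulSn; lia.
by rewrite ltn_mul2r => /andP[_].
Qed.
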